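(* Let $\lambda=2\cos(\pi/5)$ and let $H_5$ be the subgroup of $SL(2,\mathbb R)$ generated by $S=\begin{pmatrix}0&1\\-1&0\end{pmatrix}$ and $T=\begin{pmatrix}1&\lambda\\0&1\end{pmatrix}$. Let $p$ be an odd rational prime and set $a=2\lambda^2$, $c=p\lambda^3$. Then for every $m\in\mathbb Z$, $$\begin{pmatrix}1-acm\lambda & a^2m\lambda\\ -c^2m\lambda & 1+acm\lambda\end{pmatrix}\in H(m).$$
   Context: For $m\in\mathbb Z$, $H(m)=\{(a_{ij})\in H_5 : a_{11}-1,\ a_{22}-1,\ a_{12},\ a_{21}\in m\mathbb Z[\lambda]\}$. *)

(* Defs.v *)
From HB Require Import structures.
From mathcomp Require Import all_boot all_order all_algebra.
From mathcomp Require Import reals trigo.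
Set Implicit Arguments. Unset Strict Implicit. Unset Printing Implicit Defensive.
Import Order.TTheory GRing.Theory Num.Theory.
Local Open Scope ring_scope.

Definition mx2 (R : nzRingType) (a b c d : R) : 'M[R]_2 :=
  \matrix_(i < 2, j < 2)
    if i == 0 :> nat then (if j == 0 :> nat then a else b)
    else (if j == 0 :> nat then c else d).

Section Hecke.
Variable R : realType.

Definition lam : R := 2 * cos (pi / 5).

Definition Smx : 'M[R]_2 := mx2 0 1 (-1) 0.
Definition Tmx : 'M[R]_2 := mx2 1 lam 0 1.

Inductive H5 : 'M[R]_2 -> Prop :=
| H5_one : H5 1%:M
| H5_S A : H5 A -> H5 (Smx *m A)
| H5_Sinv A : H5 A -> H5 (invmx Smx *m A)
| H5_T A : H5 A -> H5 (Tmx *m A)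
| H5_Tinv A : H5 A -> H5 (invmx Tmx *m A).

(* Z[lambda] = { u + v lambda | u, v in Z }  (lambda^2 = lambda + 1) *)
Definition Zlam (x : R) : Prop :=
  exists u v : int, x = u%:~R + v%:~R * lam.

Definition in_mZlam (m : int) (x : R) : Prop :=
  exists y, Zlam y /\ x = m%:~R * y.

Definition Hm (m : int) (A : 'M[R]_2) : Prop :=
  H5 A /\ in_mZlam m (A 0 0 - 1) /\ in_mZlam m (A 1 1 - 1)
       /\ in_mZlam m (A 0 1) /\ in_mZlam m (A 1 0).

End Hecke.

(* Main.v *)
Require Import Defs.
From HB Require Import structures.
From mathcomp Require Import all_boot all_order all_algebra.
From mathcomp Require Import reals trigo.
From mathcomp Require Import ring lra.
Import Order.TTheory GRing.Theory Num.Theory.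
Local Open Scope ring_scope.
Set Implicit Arguments. Unset Strict Implicit.

Section Aux.
Variable R : realType.

Lemma mx2E (a b c d : R) :
  [/\ mx2 a b c d 0 0 = a, mx2 a b c d 0 1 = b, mx2 a b c d 1 0 = c
    & mx2 a b c d 1 1 = d].
Proof. by rewrite /mx2 !mxE. Qed.

Lemma mx2E00 (a b c d : R) : mx2 a b c d 0 0 = a. Proof. by rewrite /mx2 !mxE. Qed.
Lemma mx2E01 (a b c d : R) : mx2 a b c d 0 1 = b. Proof. by rewrite /mx2 !mxE. Qed.
Lemma mx2E10 (a b c d : R) : mx2 a b c d 1 0 = c. Proof. by rewrite /mx2 !mxE. Qed.
Lemma mx2E11 (a b c d : R) : mx2 a b c d 1 1 = d. Proof. by rewrite /mx2 !mxE. Qed.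
Lemma natzR (n : nat) : (n%:Z)%:~R = n%:R :> R. Proof. by []. Qed.

Lemma mx2M (a b c d e f g h : R) :
  mx2 a b c d *m mx2 e f g h =
  mx2 (a*e+b*g) (a*f+b*h) (c*e+d*g) (c*f+d*h).
Proof.
apply/matrixP => i j; rewrite !mxE !big_ord_recr big_ord0 /= add0r !mxE.
by case: i => [[|[|//]] ?]; case: j => [[|[|//]] ?].
Qed.

Lemma mx2_1 : (1%:M : 'M[R]_2) = mx2 1 0 0 1.
Proof.
apply/matrixP => i j; rewrite !mxE.
by case: i => [[|[|//]] ?]; case: j => [[|[|//]] ?].
Qed.

Lemma lam_rel : lam R ^+ 2 = lam R + 1.
Proof.
rewrite /lam; set t := pi / 5 : R; set c := cos t.
have ht : t *+ 3 = pi - t *+ 2 by rewrite /t; field.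
have e3 : cos (t *+ 3) = 4 * c ^+ 3 - 3 * c.
  have -> : t *+ 3 = t *+ 2 + t by rewrite mulrS addrC.
  rewrite cosD cos_mulr2n sin_mulr2n -/c.
  have hs := cos2sin2 t; rewrite -/c in hs.
  have -> : (c * sin t) *+ 2 * sin t = 2 * c * (sin t ^+ 2) by rewrite expr2 mulr2n; ring.
  have -> : sin t ^+ 2 = 1 - c ^+ 2 by rewrite hs; ring.
  ring.
have e2 : cos (pi - t *+ 2) = - (2 * c ^+ 2 - 1).
  by rewrite cosB cospi sinpi cos_mulr2n -/c; ring.
rewrite ht e2 in e3.
have cpos : 0 < c.
  apply: cos_gt0_pihalf; have hp := pi_gt0 R.
  apply/andP; split; rewrite /t; lra.
clearbody c.
have : (c + 1) * (4 * c ^+ 2 - 2 * c - 1) = 0.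
  have -> : (c + 1) * (4 * c ^+ 2 - 2 * c - 1) = 4 * c ^+ 3 - 3 * c + (2 * c ^+ 2 - 1) by ring.
  by rewrite -e3; ring.
move/eqP; rewrite mulf_eq0 => /orP [/eqP h|/eqP h]; first by lra.
apply/eqP; rewrite -subr_eq0; apply/eqP.
have -> : (2 * c) ^+ 2 - (2 * c + 1) = 4 * c ^+ 2 - 2 * c - 1 by ring.
exact: h.
Qed.

Lemma modl (l x y Q : R) : l ^+ 2 = l + 1 -> x - y = (l ^+ 2 - l - 1) * Q -> x = y.
Proof.
move=> hl h; apply/eqP; rewrite -subr_eq0 h hl.
have -> : l + 1 - l - 1 = 0 by ring.
by rewrite mul0r.
Qed.

Lemma H5_mul (A B : 'M[R]_2) : H5 A -> H5 B -> H5 (A *m B).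
Proof.
move=> hA hB; elim: hA => [|A' _ IH|A' _ IH|A' _ IH|A' _ IH].
- by rewrite mul1mx.
- by rewrite -mulmxA; apply: H5_S.
- by rewrite -mulmxA; apply: H5_Sinv.
- by rewrite -mulmxA; apply: H5_T.
- by rewrite -mulmxA; apply: H5_Tinv.
Qed.

Lemma H5_eq (A B : 'M[R]_2) : H5 A -> A = B -> H5 B.
Proof. by move=> h <-. Qed.

Lemma invmx_eq n (A B : 'M[R]_n.+1) : A *m B = 1%:M -> invmx A = B.
Proof.
move=> h; have [uA _] := mulmx1_unit h.
by rewrite -(mulKmx uA B) h mulmx1.
Qed.

Let l := lam R.

Lemma H5_Sg : H5 (mx2 0 1 (-1) 0 : 'M[R]_2).
Proof. by apply: (H5_eq (H5_S (@H5_one R))); rewrite mulmx1. Qed.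

Lemma H5_Tg : H5 (mx2 1 l 0 1 : 'M[R]_2).
Proof. by apply: (H5_eq (H5_T (@H5_one R))); rewrite mulmx1. Qed.

Lemma H5_Sig : H5 (mx2 0 (-1) 1 0 : 'M[R]_2).
Proof.
apply: (H5_eq (H5_mul H5_Sg (H5_mul H5_Sg H5_Sg))).
by rewrite !mx2M; congr mx2; ring.
Qed.

Lemma H5_Tig : H5 (mx2 1 (-l) 0 1 : 'M[R]_2).
Proof.
apply: (H5_eq (H5_Tinv (@H5_one R))); rewrite mulmx1.
apply: invmx_eq; rewrite /Tmx mx2M mx2_1 -/l; congr mx2; ring.
Qed.

Lemma H5_Tn (n : nat) : H5 (mx2 1 (n%:R * l) 0 1 : 'M[R]_2).
Proof.
elim: n => [|n IH].
  by apply: (H5_eq (@H5_one R)); rewrite mx2_1 mul0r.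
apply: (H5_eq (H5_mul H5_Tg IH)); rewrite mx2M; congr mx2; rewrite ?natrS; ring.
Qed.

Lemma H5_Tni (n : nat) : H5 (mx2 1 (- (n%:R * l)) 0 1 : 'M[R]_2).
Proof.
elim: n => [|n IH].
  by apply: (H5_eq (@H5_one R)); rewrite mx2_1 mul0r oppr0.
apply: (H5_eq (H5_mul H5_Tig IH)); rewrite mx2M; congr mx2; rewrite ?natrS; ring.
Qed.

Lemma H5_Tz (m : int) : H5 (mx2 1 (m%:~R * l) 0 1 : 'M[R]_2).
Proof.
case: m => n.
  by apply: (H5_eq (H5_Tn n)); rewrite pmulrn.
apply: (H5_eq (H5_Tni n.+1)); rewrite NegzE mulrNz pmulrn; congr mx2; ring.
Qed.

End Aux.

Unset Implicit Arguments.

Theorem lemma3p3 (R : realType) (p : nat) (m : int) :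
  prime p -> odd p ->
  let l := lam R in
  let a := 2 * l ^+ 2 in
  let c := p%:R * l ^+ 3 in
  Hm m (mx2 (1 - a * c * m%:~R * l) (a ^+ 2 * m%:~R * l)
            (- (c ^+ 2 * m%:~R * l)) (1 + a * c * m%:~R * l)).
Proof.
move=> _ hodd l a c.
set k := p./2.
have hp : (p%:R : R) = 1 + 2 * k%:R.
  by rewrite -{1}(odd_double_half p) hodd natrD -mul2n natrM.
set kk := (k%:R : R); set mm := (m%:~R : R).
rewrite /c hp /a; clear a c.
split.
  have Si := H5_Sig R; have Sg := H5_Sg R; have Tg := H5_Tg R; have Ti := H5_Tig R.
  have Tk := H5_Tn R k; have Tki := H5_Tni R k; have Tm := H5_Tz R m.
  rewrite -/l -/kk -/mm in Tg Ti Tk Tki Tm.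
  have hl : l ^+ 2 = l + 1 := lam_rel R.
  clearbody l.
  have h21 : H5 (mx2 (0 - (l * kk)) ((1%:R)) (0 - (1%:R)) 0).
    apply: (H5_eq (H5_mul Tk Sg)); rewrite mx2M; congr mx2;
    [apply: (modl (Q:=0) hl)|apply: (modl (Q:=0) hl)|apply: (modl (Q:=0) hl)|apply: (modl (Q:=0) hl)]; ring.
  have h20 : H5 (mx2 (0 - (1%:R)) 0 ((l * kk)) (0 - (1%:R))).
    apply: (H5_eq (H5_mul Sg h21)); rewrite mx2M; congr mx2;
    [apply: (modl (Q:=0) hl)|apply: (modl (Q:=0) hl)|apply: (modl (Q:=0) hl)|apply: (modl (Q:=0) hl)]; ring.
  have h19 : H5 (mx2 (0 - (1%:R) - (kk) - (l * kk)) ((l)) ((l * kk)) (0 - (1%:R))).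
    apply: (H5_eq (H5_mul Ti h20)); rewrite mx2M; congr mx2;
    [apply: (modl (Q:=(0 - (kk))) hl)|apply: (modl (Q:=0) hl)|apply: (modl (Q:=0) hl)|apply: (modl (Q:=0) hl)]; ring.
  have h18 : H5 (mx2 ((l * kk)) (0 - (1%:R)) ((1%:R) + (kk) + (l * kk)) (0 - (l))).
    apply: (H5_eq (H5_mul Sg h19)); rewrite mx2M; congr mx2;
    [apply: (modl (Q:=0) hl)|apply: (modl (Q:=0) hl)|apply: (modl (Q:=0) hl)|apply: (modl (Q:=0) hl)]; ring.
  have h17 : H5 (mx2 (0 - (kk) - (l) - (l * kk)) ((l)) ((1%:R) + (kk) + (l * kk)) (0 - (l))).
    apply: (H5_eq (H5_mul Ti h18)); rewrite mx2M; congr mx2;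
    [apply: (modl (Q:=(0 - (kk))) hl)|apply: (modl (Q:=((1%:R))) hl)|apply: (modl (Q:=0) hl)|apply: (modl (Q:=0) hl)]; ring.
  have h16 : H5 (mx2 ((1%:R) + (kk) + (l * kk)) (0 - (l)) ((kk) + (l) + (l * kk)) (0 - (l))).
    apply: (H5_eq (H5_mul Sg h17)); rewrite mx2M; congr mx2;
    [apply: (modl (Q:=0) hl)|apply: (modl (Q:=0) hl)|apply: (modl (Q:=0) hl)|apply: (modl (Q:=0) hl)]; ring.
  have h15 : H5 (mx2 ((2%:R) + (2%:R * kk) + (l) + (3%:R * l * kk)) (0 - (1%:R) - (2%:R * l)) ((kk) + (l) + (l * kk)) (0 - (l))).
    apply: (H5_eq (H5_mul Tg h16)); rewrite mx2M; congr mx2;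
    [apply: (modl (Q:=((1%:R) + (kk))) hl)|apply: (modl (Q:=(0 - (1%:R))) hl)|apply: (modl (Q:=0) hl)|apply: (modl (Q:=0) hl)]; ring.
  have h14 : H5 (mx2 ((kk) + (l) + (l * kk)) (0 - (l)) (0 - (2%:R) - (2%:R * kk) - (l) - (3%:R * l * kk)) ((1%:R) + (2%:R * l))).
    apply: (H5_eq (H5_mul Sg h15)); rewrite mx2M; congr mx2;
    [apply: (modl (Q:=0) hl)|apply: (modl (Q:=0) hl)|apply: (modl (Q:=0) hl)|apply: (modl (Q:=0) hl)]; ring.
  have h13 : H5 (mx2 (0 - (1%:R) - (2%:R * kk) - (2%:R * l) - (4%:R * l * kk)) ((2%:R) + (2%:R * l)) (0 - (2%:R) - (2%:R * kk) - (l) - (3%:R * l * kk)) ((1%:R) + (2%:R * l))).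
    apply: (H5_eq (H5_mul Tg h14)); rewrite mx2M; congr mx2;
    [apply: (modl (Q:=(0 - (1%:R) - (3%:R * kk))) hl)|apply: (modl (Q:=((2%:R))) hl)|apply: (modl (Q:=0) hl)|apply: (modl (Q:=0) hl)]; ring.
  have h12 : H5 (mx2 (0 - (2%:R) - (2%:R * kk) - (l) - (3%:R * l * kk)) ((1%:R) + (2%:R * l)) ((1%:R) + (2%:R * kk) + (2%:R * l) + (4%:R * l * kk)) (0 - (2%:R) - (2%:R * l))).
    apply: (H5_eq (H5_mul Sg h13)); rewrite mx2M; congr mx2;
    [apply: (modl (Q:=0) hl)|apply: (modl (Q:=0) hl)|apply: (modl (Q:=0) hl)|apply: (modl (Q:=0) hl)]; ring.
  have h11 : H5 (mx2 (0 - (2%:R) + (2%:R * mm) - (2%:R * kk) + (4%:R * kk * mm) - (l) + (3%:R * l * mm) - (3%:R * l * kk) + (6%:R * l * kk * mm)) ((1%:R) - (2%:R * mm) + (2%:R * l) - (4%:R * l * mm)) ((1%:R) + (2%:R * kk) + (2%:R * l) + (4%:R * l * kk)) (0 - (2%:R) - (2%:R * l))).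
    apply: (H5_eq (H5_mul Tm h12)); rewrite mx2M; congr mx2;
    [apply: (modl (Q:=((2%:R * mm) + (4%:R * kk * mm))) hl)|apply: (modl (Q:=(0 - (2%:R * mm))) hl)|apply: (modl (Q:=0) hl)|apply: (modl (Q:=0) hl)]; ring.
  have h10 : H5 (mx2 (0 - (1%:R) - (2%:R * kk) - (2%:R * l) - (4%:R * l * kk)) ((2%:R) + (2%:R * l)) (0 - (2%:R) + (2%:R * mm) - (2%:R * kk) + (4%:R * kk * mm) - (l) + (3%:R * l * mm) - (3%:R * l * kk) + (6%:R * l * kk * mm)) ((1%:R) - (2%:R * mm) + (2%:R * l) - (4%:R * l * mm))).
    apply: (H5_eq (H5_mul Si h11)); rewrite mx2M; congr mx2;
    [apply: (modl (Q:=0) hl)|apply: (modl (Q:=0) hl)|apply: (modl (Q:=0) hl)|apply: (modl (Q:=0) hl)]; ring.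
  have h9 : H5 (mx2 (0 - (3%:R * mm) + (kk) - (6%:R * kk * mm) + (l) - (5%:R * l * mm) + (l * kk) - (10%:R * l * kk * mm)) ((4%:R * mm) - (l) + (6%:R * l * mm)) (0 - (2%:R) + (2%:R * mm) - (2%:R * kk) + (4%:R * kk * mm) - (l) + (3%:R * l * mm) - (3%:R * l * kk) + (6%:R * l * kk * mm)) ((1%:R) - (2%:R * mm) + (2%:R * l) - (4%:R * l * mm))).
    apply: (H5_eq (H5_mul Ti h10)); rewrite mx2M; congr mx2;
    [apply: (modl (Q:=((1%:R) - (3%:R * mm) + (3%:R * kk) - (6%:R * kk * mm))) hl)|apply: (modl (Q:=(0 - (2%:R) + (4%:R * mm))) hl)|apply: (modl (Q:=0) hl)|apply: (modl (Q:=0) hl)]; ring.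
  have h8 : H5 (mx2 ((2%:R) - (2%:R * mm) + (2%:R * kk) - (4%:R * kk * mm) + (l) - (3%:R * l * mm) + (3%:R * l * kk) - (6%:R * l * kk * mm)) (0 - (1%:R) + (2%:R * mm) - (2%:R * l) + (4%:R * l * mm)) (0 - (3%:R * mm) + (kk) - (6%:R * kk * mm) + (l) - (5%:R * l * mm) + (l * kk) - (10%:R * l * kk * mm)) ((4%:R * mm) - (l) + (6%:R * l * mm))).
    apply: (H5_eq (H5_mul Si h9)); rewrite mx2M; congr mx2;
    [apply: (modl (Q:=0) hl)|apply: (modl (Q:=0) hl)|apply: (modl (Q:=0) hl)|apply: (modl (Q:=0) hl)]; ring.
  have h7 : H5 (mx2 ((1%:R) + (3%:R * mm) + (kk) + (6%:R * kk * mm) + (5%:R * l * mm) + (l * kk) + (10%:R * l * kk * mm)) (0 - (4%:R * mm) - (l) - (6%:R * l * mm)) (0 - (3%:R * mm) + (kk) - (6%:R * kk * mm) + (l) - (5%:R * l * mm) + (l * kk) - (10%:R * l * kk * mm)) ((4%:R * mm) - (l) + (6%:R * l * mm))).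
    apply: (H5_eq (H5_mul Ti h8)); rewrite mx2M; congr mx2;
    [apply: (modl (Q:=(0 - (1%:R) + (5%:R * mm) - (kk) + (10%:R * kk * mm))) hl)|apply: (modl (Q:=((1%:R) - (6%:R * mm))) hl)|apply: (modl (Q:=0) hl)|apply: (modl (Q:=0) hl)]; ring.
  have h6 : H5 (mx2 ((3%:R * mm) - (kk) + (6%:R * kk * mm) - (l) + (5%:R * l * mm) - (l * kk) + (10%:R * l * kk * mm)) (0 - (4%:R * mm) + (l) - (6%:R * l * mm)) ((1%:R) + (3%:R * mm) + (kk) + (6%:R * kk * mm) + (5%:R * l * mm) + (l * kk) + (10%:R * l * kk * mm)) (0 - (4%:R * mm) - (l) - (6%:R * l * mm))).
    apply: (H5_eq (H5_mul Si h7)); rewrite mx2M; congr mx2;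
    [apply: (modl (Q:=0) hl)|apply: (modl (Q:=0) hl)|apply: (modl (Q:=0) hl)|apply: (modl (Q:=0) hl)]; ring.
  have h5 : H5 (mx2 ((8%:R * mm) + (16%:R * kk * mm) + (13%:R * l * mm) + (l * kk) + (26%:R * l * kk * mm)) (0 - (1%:R) - (10%:R * mm) - (16%:R * l * mm)) ((1%:R) + (3%:R * mm) + (kk) + (6%:R * kk * mm) + (5%:R * l * mm) + (l * kk) + (10%:R * l * kk * mm)) (0 - (4%:R * mm) - (l) - (6%:R * l * mm))).
    apply: (H5_eq (H5_mul Tg h6)); rewrite mx2M; congr mx2;
    [apply: (modl (Q:=((5%:R * mm) + (kk) + (10%:R * kk * mm))) hl)|apply: (modl (Q:=(0 - (1%:R) - (6%:R * mm))) hl)|apply: (modl (Q:=0) hl)|apply: (modl (Q:=0) hl)]; ring.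
  have h4 : H5 (mx2 (0 - (1%:R) - (3%:R * mm) - (kk) - (6%:R * kk * mm) - (5%:R * l * mm) - (l * kk) - (10%:R * l * kk * mm)) ((4%:R * mm) + (l) + (6%:R * l * mm)) ((8%:R * mm) + (16%:R * kk * mm) + (13%:R * l * mm) + (l * kk) + (26%:R * l * kk * mm)) (0 - (1%:R) - (10%:R * mm) - (16%:R * l * mm))).
    apply: (H5_eq (H5_mul Si h5)); rewrite mx2M; congr mx2;
    [apply: (modl (Q:=0) hl)|apply: (modl (Q:=0) hl)|apply: (modl (Q:=0) hl)|apply: (modl (Q:=0) hl)]; ring.
  have h3 : H5 (mx2 (0 - (1%:R) + (10%:R * mm) + (20%:R * kk * mm) + (16%:R * l * mm) + (32%:R * l * kk * mm)) (0 - (12%:R * mm) - (20%:R * l * mm)) ((8%:R * mm) + (16%:R * kk * mm) + (13%:R * l * mm) + (l * kk) + (26%:R * l * kk * mm)) (0 - (1%:R) - (10%:R * mm) - (16%:R * l * mm))).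
    apply: (H5_eq (H5_mul Tg h4)); rewrite mx2M; congr mx2;
    [apply: (modl (Q:=((13%:R * mm) + (kk) + (26%:R * kk * mm))) hl)|apply: (modl (Q:=(0 - (16%:R * mm))) hl)|apply: (modl (Q:=0) hl)|apply: (modl (Q:=0) hl)]; ring.
  have h2 : H5 (mx2 (0 - (8%:R * mm) - (16%:R * kk * mm) - (13%:R * l * mm) - (l * kk) - (26%:R * l * kk * mm)) ((1%:R) + (10%:R * mm) + (16%:R * l * mm)) (0 - (1%:R) + (10%:R * mm) + (20%:R * kk * mm) + (16%:R * l * mm) + (32%:R * l * kk * mm)) (0 - (12%:R * mm) - (20%:R * l * mm))).
    apply: (H5_eq (H5_mul Si h3)); rewrite mx2M; congr mx2;
    [apply: (modl (Q:=0) hl)|apply: (modl (Q:=0) hl)|apply: (modl (Q:=0) hl)|apply: (modl (Q:=0) hl)]; ring.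
  have h1 : H5 (mx2 (0 - (8%:R * mm) - (32%:R * kk * mm) - (32%:R * kk ^+ 2 * mm) - (13%:R * l * mm) - (52%:R * l * kk * mm) - (52%:R * l * kk ^+ 2 * mm)) ((1%:R) + (10%:R * mm) + (20%:R * kk * mm) + (16%:R * l * mm) + (32%:R * l * kk * mm)) (0 - (1%:R) + (10%:R * mm) + (20%:R * kk * mm) + (16%:R * l * mm) + (32%:R * l * kk * mm)) (0 - (12%:R * mm) - (20%:R * l * mm))).
    apply: (H5_eq (H5_mul Tki h2)); rewrite mx2M; congr mx2;
    [apply: (modl (Q:=(0 - (16%:R * kk * mm) - (32%:R * kk ^+ 2 * mm))) hl)|apply: (modl (Q:=((20%:R * kk * mm))) hl)|apply: (modl (Q:=0) hl)|apply: (modl (Q:=0) hl)]; ring.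
  have h0 : H5 (mx2 ((1%:R) - (10%:R * mm) - (20%:R * kk * mm) - (16%:R * l * mm) - (32%:R * l * kk * mm)) ((12%:R * mm) + (20%:R * l * mm)) (0 - (8%:R * mm) - (32%:R * kk * mm) - (32%:R * kk ^+ 2 * mm) - (13%:R * l * mm) - (52%:R * l * kk * mm) - (52%:R * l * kk ^+ 2 * mm)) ((1%:R) + (10%:R * mm) + (20%:R * kk * mm) + (16%:R * l * mm) + (32%:R * l * kk * mm))).
    apply: (H5_eq (H5_mul Si h1)); rewrite mx2M; congr mx2;
    [apply: (modl (Q:=0) hl)|apply: (modl (Q:=0) hl)|apply: (modl (Q:=0) hl)|apply: (modl (Q:=0) hl)]; ring.
  apply: (H5_eq h0); congr mx2;
    [apply: (modl (Q:=((10%:R * mm) + (20%:R * kk * mm) + (6%:R * l * mm) + (12%:R * l * kk * mm) + (4%:R * l ^+ 2 * mm) + (8%:R * l ^+ 2 * kk * mm) + (2%:R * l ^+ 3 * mm) + (4%:R * l ^+ 3 * kk * mm) + (2%:R * l ^+ 4 * mm) + (4%:R * l ^+ 4 * kk * mm))) hl)|apply: (modl (Q:=(0 - (12%:R * mm) - (8%:R * l * mm) - (4%:R * l ^+ 2 * mm) - (4%:R * l ^+ 3 * mm))) hl)|apply: (modl (Q:=((8%:R * mm) + (32%:R * kk * mm) + (32%:R * kk ^+ 2 * mm) + (5%:R * l * mm) + (20%:R * l * kk * mm) + (20%:R * l * kk ^+ 2 * mm) + (3%:R * l ^+ 2 * mm) + (12%:R * l ^+ 2 * kk * mm) + (12%:R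 * l ^+ 2 * kk ^+ 2 * mm) + (2%:R * l ^+ 3 * mm) + (8%:R * l ^+ 3 * kk * mm) + (8%:R * l ^+ 3 * kk ^+ 2 * mm) + (l ^+ 4 * mm) + (4%:R * l ^+ 4 * kk * mm) + (4%:R * l ^+ 4 * kk ^+ 2 * mm) + (l ^+ 5 * mm) + (4%:R * l ^+ 5 * kk * mm) + (4%:R * l ^+ 5 * kk ^+ 2 * mm))) hl)|apply: (modl (Q:=(0 - (10%:R * mm) - (20%:R * kk * mm) - (6%:R * l * mm) - (12%:R * l * kk * mm) - (4%:R * l ^+ 2 * mm) - (8%:R * l ^+ 2 * kk * mm) - (2%:R * l ^+ 3 * mm) - (4%:R * l ^+ 3 * kk * mm) - (2%:R * l ^+ 4 * mm) - (4%:R * l ^+ 4 * kk * mm))) hl)]; ring.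

have hl : l ^+ 2 = l + 1 := lam_rel R.
rewrite mx2E00 mx2E01 mx2E10 mx2E11.
split; [|split; [|split]].
  - exists ((- (10 * p)%:Z)%:~R + (- (16 * p)%:Z)%:~R * l); split; first by exists (- (10 * p)%:Z), (- (16 * p)%:Z).
    rewrite ?intrN !natzR ?natrM ?hp; apply: (modl (Q:=(0 - (10%:R * mm) - (20%:R * kk * mm) - (6%:R * l * mm) - (12%:R * l * kk * mm) - (4%:R * l ^+ 2 * mm) - (8%:R * l ^+ 2 * kk * mm) - (2%:R * l ^+ 3 * mm) - (4%:R * l ^+ 3 * kk * mm) - (2%:R * l ^+ 4 * mm) - (4%:R * l ^+ 4 * kk * mm))) hl); ring.
  - exists ((10 * p)%:Z%:~R + (16 * p)%:Z%:~R * l); split; first by exists (10 * p)%:Z, (16 * p)%:Z.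
    rewrite ?intrN !natzR ?natrM ?hp; apply: (modl (Q:=((10%:R * mm) + (20%:R * kk * mm) + (6%:R * l * mm) + (12%:R * l * kk * mm) + (4%:R * l ^+ 2 * mm) + (8%:R * l ^+ 2 * kk * mm) + (2%:R * l ^+ 3 * mm) + (4%:R * l ^+ 3 * kk * mm) + (2%:R * l ^+ 4 * mm) + (4%:R * l ^+ 4 * kk * mm))) hl); ring.
  - exists ((12%N)%:Z%:~R + (20%N)%:Z%:~R * l); split; first by exists (12%N)%:Z, (20%N)%:Z.
    rewrite ?intrN !natzR ?natrM ?hp; apply: (modl (Q:=((12%:R * mm) + (8%:R * l * mm) + (4%:R * l ^+ 2 * mm) + (4%:R * l ^+ 3 * mm))) hl); ring.
  - exists ((- (8 * p * p)%:Z)%:~R + (- (13 * p * p)%:Z)%:~R * l); split; first by exists (- (8 * p * p)%:Z), (- (13 * p * p)%:Z).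
    rewrite ?intrN !natzR ?natrM ?hp; apply: (modl (Q:=(0 - (8%:R * mm) - (32%:R * kk * mm) - (32%:R * kk ^+ 2 * mm) - (5%:R * l * mm) - (20%:R * l * kk * mm) - (20%:R * l * kk ^+ 2 * mm) - (3%:R * l ^+ 2 * mm) - (12%:R * l ^+ 2 * kk * mm) - (12%:R * l ^+ 2 * kk ^+ 2 * mm) - (2%:R * l ^+ 3 * mm) - (8%:R * l ^+ 3 * kk * mm) - (8%:R * l ^+ 3 * kk ^+ 2 * mm) - (l ^+ 4 * mm) - (4%:R * l ^+ 4 * kk * mm) - (4%:R * l ^+ 4 * kk ^+ 2 * mm) - (l ^+ 5 * mm) - (4%:R * l ^+ 5 * kk * mm) - (4%:R * l ^+ 5 * kk ^+ 2 * mm))) hl); ring.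
Qed.
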